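(* Let $G=SL(n,\mathbb{R})$, $u\in\mathcal{S}_n$, $x\in Y_{\ge u}$, and $A=u^{-1}[xu^{-1}]_+u$. Let $1\le i\le n$ and $1\le j\le n-1$. (1) If $i\le j$ and $u(j)\le u(i)\le u(j+1)$, then $(A^{-1})_{j,i}\,A_{i,j+1}\ge0$. (2) If $j<i$ and $u(j)\le u(i)\le u(j+1)$, then $(A^{-1})_{j,i}\,A_{i,j+1}\le0$. (3) Otherwise, $(A^{-1})_{j,i}\,A_{i,j+1}=0$.
   Context: $B_-,H,N,N_-$ denote the lower-triangular, diagonal, unipotent upper triangular and unipotent lower triangular matrices. Elements of $W=\mathcal{S}_n$ are bijections of $\{1,\dots,n\}$, represented by permutation matrices $u$ with $ue_b=e_{u(b)}$ (so $(u^{-1}Mu)_{i,k}=M_{u(i),u(k)}$; computations are done in $GL(n,\mathbb{R})$). For an invertible matrix $z$ with nonzero leading principal minors, $z=[z]_-[z]_0[z]_+$ is its Gaussian (LDU) decomposition with $[z]_+$ unipotent upper triangular. $Y$ is the set of unipotent upper triangular real matrices all of whose minors are nonnegative; $Y^\circ_w=Y\cap B_-wB_-$, and $Y_{\ge u}=\bigcup_{w\ge u}Y^\circ_w$ with respect to the Bruhat order ($u\le w$ iff $B_-uB_-\subset\overline{B_-wB_-}$). For $x\in Y_{\ge u}$ the matrix $xu^{-1}$ has a Gaussian decomposition, so $A$ is defined. *)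

(* Defs.v *)
From HB Require Import structures.
From mathcomp Require Import all_boot all_order all_algebra all_fingroup.
From mathcomp Require Import all_classical all_reals all_analysis.
Set Implicit Arguments. Unset Strict Implicit. Unset Printing Implicit Defensive.
Import Order.TTheory GRing.Theory Num.Theory.
Import numFieldNormedType.Exports.
Local Open Scope ring_scope.
Local Open Scope classical_set_scope.

Section Defs.
Variables (R : realType) (n : nat).

(* Permutation matrix of u, with u e_b = e_{u(b)}, i.e. entry (a,b) is [a = u b]. *)
Definition pmx (u : 'S_n) : 'M[R]_n := \matrix_(a, b) (a == u b)%:R.

Definition lower_tri (M : 'M[R]_n) : Prop := forall i j : 'I_n, (i < j)%N -> M i j = 0.
Definition upper_tri (M : 'M[R]_n) : Prop := forall i j : 'I_n, (j < i)%N -> M i j = 0.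
Definition diag_mx_P (M : 'M[R]_n) : Prop := forall i j : 'I_n, i != j -> M i j = 0.
Definition unipotent_diag (M : 'M[R]_n) : Prop := forall i : 'I_n, M i i = 1.

Definition Bminus (M : 'M[R]_n) : Prop := lower_tri M /\ M \in unitmx.
Definition Nplus (M : 'M[R]_n) : Prop := upper_tri M /\ unipotent_diag M.
Definition Nminus (M : 'M[R]_n) : Prop := lower_tri M /\ unipotent_diag M.
Definition Hdiag (M : 'M[R]_n) : Prop := diag_mx_P M /\ M \in unitmx.

Definition bruhat_cell (w : 'S_n) : set 'M[R]_n :=
  [set M | exists b1 b2, Bminus b1 /\ Bminus b2 /\ M = b1 *m pmx w *m b2].

Definition bruhat_le (u w : 'S_n) : Prop :=
  bruhat_cell u `<=` closure (bruhat_cell w).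

Definition minor k (M : 'M[R]_n) (f g : 'I_k -> 'I_n) : R :=
  \det (\matrix_(a, b) M (f a) (g b)).

Definition strict_incr k (f : 'I_k -> 'I_n) : Prop :=
  forall a b : 'I_k, (a < b)%N -> (f a < f b)%N.

Definition Y_tnn (x : 'M[R]_n) : Prop :=
  Nplus x /\ forall k (f g : 'I_k -> 'I_n), strict_incr f -> strict_incr g ->
    0 <= minor x f g.

Definition Y_ge (u : 'S_n) (x : 'M[R]_n) : Prop :=
  Y_tnn x /\ exists w : 'S_n, bruhat_le u w /\ bruhat_cell w x.

Definition gauss_plus (z U : 'M[R]_n) : Prop :=
  Nplus U /\ exists L D, Nminus L /\ Hdiag D /\ z = L *m D *m U.

End Defs.

(* Main.v *)
Require Import Defs.
From HB Require Import structures.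
From mathcomp Require Import all_boot all_order all_algebra all_fingroup.
From mathcomp Require Import all_classical all_reals all_analysis.
From mathcomp Require Import ring lra.
Set Implicit Arguments. Unset Strict Implicit. Unset Printing Implicit Defensive.
Import Order.TTheory GRing.Theory Num.Theory.
Import numFieldNormedType.Exports.
Local Open Scope ring_scope.
Lemma sort_exists m N (w : 'I_m -> 'I_N) : injective w ->
  exists s : 'S_m, strict_incr (fun k => w (s k)).
Proof.
move=> winj.
pose t := [tuple (val (w k)) | k < m].
have ut : uniq t.
  rewrite /= map_inj_uniq ?enum_uniq // => a b /val_inj; exact: winj.
have : perm_eq (sort leq t) t by rewrite (perm_sort leq) perm_refl.
case/tuple_permP => s Hs; exists s => a b ab.
have so : sorted ltn (sort leq t).
  by rewrite ltn_sorted_uniq_leq sort_uniq ut sort_sorted //; exact: leq_total.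
have := sorted_ltn_nth ltn_trans 0 so.
have sz : size (sort leq t) = m by rewrite size_sort size_tuple.
move=> /(_ a b); rewrite !inE sz !ltn_ord => /(_ isT isT ab).
rewrite Hs /= !(nth_map a) ?size_enum_ord -?enumT ?size_enum_ord // !nth_ord_enum.
by rewrite !tnth_map !tnth_ord_tuple.
Qed.

Section Gen.
Variable R : realType.

Lemma minor_colperm N (M : 'M[R]_N) m (f g : 'I_m -> 'I_N) (s : 'S_m) :
  minor M f (fun k => g (s k)) = (-1) ^+ s * minor M f g.
Proof.
rewrite /minor.
have -> : \matrix_(a, b) M (f a) (g (s b)) = col_perm s (\matrix_(a, b) M (f a) (g b)).
  by apply/matrixP => a b; rewrite !mxE.
by rewrite col_permE det_mulmx det_perm odd_permV mulrC.
Qed.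

Definition phi m N (w : 'I_m -> 'I_N) : R :=
  \prod_(p < m) \prod_(q < m | (p < q)%N) ((w q)%:R - (w p)%:R).

Lemma phi_det m N (w : 'I_m -> 'I_N) :
  phi w = \det (Vandermonde m (\row_q ((w q)%:R : R))).
Proof.
rewrite det_Vandermonde /phi; apply: eq_bigr => p _; apply: eq_bigr => q _.
by rewrite !mxE.
Qed.

Lemma phi_perm m N (w : 'I_m -> 'I_N) (s : 'S_m) :
  phi (fun k => w (s k)) = (-1) ^+ s * phi w.
Proof.
rewrite !phi_det.
have -> : Vandermonde m (\row_q ((w (s q))%:R : R)) = col_perm s (Vandermonde m (\row_q ((w q)%:R : R))).
  by apply/matrixP => a b; rewrite !mxE.
by rewrite col_permE det_mulmx det_perm odd_permV mulrC.
Qed.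

Lemma key_sign N (x : 'M[R]_N) m (f w : 'I_m -> 'I_N) :
  (forall k (f g : 'I_k -> 'I_N), strict_incr f -> strict_incr g -> 0 <= minor x f g) ->
  strict_incr f -> injective w -> 0 <= minor x f w * phi w.
Proof.
move=> Hx hf winj; have [s hs] := sort_exists winj.
have H1 := Hx _ f _ hf hs.
have H2 : 0 <= phi (fun k => w (s k)).
  apply: prodr_ge0 => p _; apply: prodr_ge0 => q pq.
  by rewrite subr_ge0 ler_nat ltnW // hs.
have := mulr_ge0 H1 H2; rewrite minor_colperm phi_perm.
by rewrite mulrACA -expr2 sqrr_sign mul1r.
Qed.

Lemma det_upper k (M : 'M[R]_k) : (forall r c : 'I_k, (c < r)%N -> M r c = 0) ->
  \det M = \prod_(r < k) M r r.
Proof.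
move=> h; rewrite -det_tr det_trig; last by apply/is_trig_mxP => r c rc; rewrite mxE h.
by apply: eq_bigr => r _; rewrite mxE.
Qed.

Definition repl k (M : 'M[R]_k) (a : 'I_k) (y : 'I_k -> R) : 'M[R]_k :=
  \matrix_(r, c) if c == a then y r else M r c.

Lemma det_repl1 k (a : 'I_k) (w : 'I_k -> R) : \det (repl 1%:M a w) = w a.
Proof.
case: k a w => [|k] a w; first by case: a.
rewrite (expand_det_row _ a) (bigD1 a) //= big1 ?addr0; last first.
  by move=> c ca; rewrite !mxE (negbTE ca) eq_sym (negbTE ca) mul0r.
rewrite !mxE eqxx /cofactor -signr_odd oddD addbb expr0 mul1r.
have -> : row' a (col' a (repl 1%:M a w)) = 1%:M.
  apply/matrixP => r c; rewrite !mxE.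
  have /negbTE -> : lift a c != a by rewrite eq_sym neq_lift.
  by rewrite (inj_eq (@lift_inj _ a)).
by rewrite det1 mulr1.
Qed.

Lemma cramer k (M : 'M[R]_k) (w : 'I_k -> R) a :
  \det M * w a = \det (repl M a (fun r => \sum_t M r t * w t)).
Proof.
have -> : repl M a (fun r => \sum_t M r t * w t) = M *m repl 1%:M a w.
  apply/matrixP => r c; rewrite !mxE; case: eqP => [->|ca].
    by apply: eq_bigr => t _; rewrite !mxE eqxx.
  rewrite (bigD1 c) //= big1 ?addr0; last first.
    by move=> t tc; rewrite !mxE; case: eqP => _ //; rewrite (negbTE tc) mulr0.
  by rewrite !mxE (introF eqP ca) eqxx mulr1.
by rewrite det_mulmx det_repl1.
Qed.

Lemma prod_pairs m (p : 'I_m) (G : 'I_m -> R) :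
  \prod_(x < m) \prod_(y < m | (x < y)%N)
     (if x == p then G y else if y == p then G x else 1) = \prod_(q < m | q != p) G q.
Proof.
transitivity (\prod_(x < m) (if x == p then \prod_(y < m | (p < y)%N) G y
                             else if (x < p)%N then G x else 1)).
  apply: eq_bigr => x _; case: (eqVneq x p) => [->|xp].
    by apply: eq_bigr => y _; rewrite ?eqxx.
  case: ifP => xltp.
    rewrite (bigD1 p) //= eqxx big1 ?mulr1 // => y /andP[_ /negbTE ->] //.
  apply: big1 => y xy; case: eqP => // yp; subst y.
  by rewrite xy in xltp.
rewrite (bigD1 p) //= eqxx.
rewrite [RHS](bigID (fun q : 'I_m => (q < p)%N)) /= [RHS]mulrC; congr (_ * _).
  apply: eq_bigl => q; rewrite -leqNgt ltn_neqAle eq_sym.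
  by case: (q != p); rewrite ?andbF.
rewrite big_mkcond /= [RHS]big_mkcond /=; apply: eq_bigr => q _.
case: (eqVneq q p) => [->|qp] //=.
Qed.

Lemma phi_replace m N (w w' : 'I_m -> 'I_N) p :
  (forall q, q != p -> w' q = w q) -> injective w ->
  exists2 Q : R, 0 < Q & phi w' * phi w =
    Q * \prod_(q < m | q != p) (((w' p)%:R - (w q)%:R) * ((w p)%:R - (w q)%:R)).
Proof.
move=> hw winj.
exists (\prod_(x < m) \prod_(y < m | (x < y)%N)
   (if (x == p) || (y == p) then 1 else ((w y)%:R - (w x)%:R) ^+ 2)).
  apply: prodr_gt0 => x _; apply: prodr_gt0 => y xy; case: ifP => _; first exact: ltr01.
  rewrite exprn_even_gt0 // subr_eq0 eqr_nat; apply/negP => /eqP e.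
  by have := winj _ _ (val_inj e) => yx; rewrite yx ltnn in xy.
rewrite -prod_pairs /phi -!big_split /=; apply: eq_bigr => x _.
rewrite -!big_split; apply: eq_bigr => y xy /=.
case: (eqVneq x p) => [exp|xp]; case: (eqVneq y p) => [eyp|yp] /=.
- by subst; rewrite ltnn in xy.
- subst x; rewrite (hw y yp) mul1r -[(w y)%:R - (w' p)%:R]opprB.
  by rewrite -[(w y)%:R - (w p)%:R]opprB mulrNN.
- by subst y; rewrite (hw x xp) mul1r.
- by rewrite (hw x xp) (hw y yp) mulr1 expr2.
Qed.
End Gen.

Section Main.
Variables (R : realType) (N : nat).

Definition fm (m : nat) (r : 'I_m) : 'I_N.+1 := inord r.

Lemma fmK m (r : 'I_m) : (m <= N.+1)%N -> fm r = r :> nat.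
Proof. by move=> hm; rewrite /fm inordK // (leq_trans (ltn_ord r) hm). Qed.

Lemma fm_strict m : (m <= N.+1)%N -> strict_incr (@fm m).
Proof. by move=> hm a b ab; rewrite !fmK. Qed.

Lemma fm_inj m : (m <= N.+1)%N -> injective (@fm m).
Proof. by move=> hm a b /(congr1 val); rewrite /= !fmK // => /val_inj. Qed.

Lemma sum_trunc (F : 'I_N.+1 -> R) m : (m <= N.+1)%N ->
  (forall t : 'I_N.+1, (m <= t)%N -> F t = 0) -> \sum_t F t = \sum_(r < m) F (fm r).
Proof.
move=> hm hF.
rewrite (bigID (fun t : 'I_N.+1 => (t < m)%N)) /= [X in _ + X]big1 ?addr0; last first.
  by move=> t; rewrite -leqNgt; exact: hF.
rewrite (big_ord_narrow hm); apply: eq_bigr => r _; congr F; apply: val_inj.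
by rewrite /= fmK.
Qed.

Variable U : 'M[R]_N.+1.
Hypothesis hUu : forall r c : 'I_N.+1, (c < r)%N -> U r c = 0.
Hypothesis hUd : forall r, U r r = 1.

Lemma detU : \det U = 1.
Proof. by rewrite det_upper // big1. Qed.

Lemma U_unit : U \in unitmx.
Proof. by rewrite unitmxE detU unitr1. Qed.

Lemma V_low (a b : 'I_N.+1) : (b <= a)%N -> invmx U a b = (a == b)%:R.
Proof.
move=> ba; have := cramer U (fun t => invmx U t b) a; rewrite detU mul1r => ->.
have -> : repl U a (fun r => \sum_t U r t * invmx U t b) = repl U a (fun r => (r == b)%:R).
  apply/matrixP => r c; rewrite !mxE; case: ifP => // _.
  by have := mulmxV U_unit; move/matrixP/(_ r b); rewrite !mxE.
rewrite det_upper; last first.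
  move=> r c cr; rewrite mxE; case: eqP => [ca|_]; last exact: hUu.
  by case: eqP => // rb; subst; rewrite ltnNge ba in cr.
rewrite (bigD1 a) //= !mxE eqxx big1 ?mulr1 // => r /negbTE ra.
by rewrite !mxE ra hUd.
Qed.

Lemma minorU_id m : (m <= N.+1)%N -> minor U (@fm m) (@fm m) = 1.
Proof.
move=> hm; rewrite /minor det_upper; last by move=> r c cr; rewrite mxE hUu // !fmK.
by rewrite big1 // => r _; rewrite mxE hUd.
Qed.

Lemma fm_max (b : 'I_N.+1) : fm (@ord_max b) = b.
Proof. by apply: val_inj; rewrite /= fmK. Qed.

Lemma minorU_bc (b c : 'I_N.+1) : (b <= c)%N ->
  minor U (@fm b.+1) (fun s => if s == ord_max then c else fm s) = U b c.
Proof.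
move=> bc; rewrite /minor det_upper; last first.
  move=> r s sr; rewrite mxE; case: eqP => [se|_]; last by rewrite hUu // !fmK.
  by move: sr; rewrite se /= ltnNge -ltnS ltn_ord.
rewrite (bigD1 ord_max) //= mxE eqxx fm_max big1 ?mulr1 // => r /negbTE rm.
by rewrite mxE rm hUd.
Qed.

Lemma minorU_ab (a b : 'I_N.+1) (ab : (a < b)%N) :
  minor U (@fm b) (fun s => if s == Ordinal ab then b else fm s) = - invmx U a b.
Proof.
have hb : (b <= N.+1)%N by exact: ltnW.
pose Ub : 'M[R]_b := \matrix_(r, s) U (@fm b r) (fm s).
have dUb : \det Ub = 1 by have := minorU_id hb.
have fa : fm (Ordinal ab) = a by apply: val_inj; rewrite /= inordK // (ltn_trans ab).
have := cramer Ub (fun t => - invmx U (fm t) b) (Ordinal ab).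
rewrite dUb mul1r fa => ->; rewrite /minor; congr (\det _).
apply/matrixP => r s; rewrite !mxE; case: ifP => // _.
have e : \sum_t U (@fm b r) t * invmx U t b = 0.
  have := mulmxV U_unit; move/matrixP/(_ (fm r) b); rewrite !mxE => ->.
  by case: eqP => // /(congr1 val); rewrite /= fmK // => e; have := ltn_ord r; rewrite e ltnn.
rewrite (@sum_trunc _ b.+1) // in e; last first.
  move=> t bt; rewrite V_low ?(ltnW bt) //; case: eqP => [e'|_]; last by rewrite mulr0.
  by rewrite e' ltnn in bt.
rewrite big_ord_recr /= fm_max V_low // eqxx mulr1 in e.
have e2 : \sum_(t < b) U (fm r) (fm t) * invmx U (fm t) b = - U (fm r) b.
  by apply/eqP; rewrite -subr_eq0 opprK; apply/eqP; exact: e.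
under eq_bigr do rewrite !mxE mulrN.
by rewrite sumrN e2 opprK.
Qed.


Lemma lt_max k (t : 'I_k.+1) : t != ord_max -> (t < k)%N.
Proof.
move=> tm; have := ltn_ord t; rewrite ltnS leq_eqVlt => /orP[/eqP te|//].
by case/eqP: tm; apply: val_inj.
Qed.

Lemma prod_but_max k (F : 'I_k.+1 -> R) :
  \prod_(q < k.+1 | q != ord_max) F q = \prod_(q < k) F (widen_ord (leqnSn k) q).
Proof.
rewrite big_mkcond big_ord_recr /= eqxx mulr1; apply: eq_bigr => q _.
rewrite ifT //; apply/eqP => /(congr1 val) /= e; have := ltn_ord q.
by rewrite e ltnn.
Qed.

Variables (L D : 'M[R]_N.+1).
Hypothesis hLl : forall r c : 'I_N.+1, (r < c)%N -> L r c = 0.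
Hypothesis hLd : forall r, L r r = 1.
Hypothesis hDd : forall r c : 'I_N.+1, r != c -> D r c = 0.
Hypothesis hDu : D \in unitmx.

Lemma LD_entry r c : (L *m D) r c = L r c * D c c.
Proof.
rewrite mxE (bigD1 c) //= big1 ?addr0 // => t tc; rewrite hDd ?mulr0 //.
Qed.

Lemma D_nz c : D c c != 0.
Proof.
have : \det D != 0 by rewrite -unitfE -unitmxE.
rewrite det_trig; last by apply/is_trig_mxP => r s rs; apply: hDd; apply/eqP => e; rewrite e ltnn in rs.
by move/prodf_neq0; apply.
Qed.

Lemma delta_nz m : \prod_(r < m) D (@fm m r) (fm r) != 0.
Proof. by apply/prodf_neq0 => r _; exact: D_nz. Qed.

Lemma minor_z m (g : 'I_m -> 'I_N.+1) : (m <= N.+1)%N ->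
  minor (L *m D *m U) (@fm m) g = (\prod_(r < m) D (fm r) (fm r)) * minor U (@fm m) g.
Proof.
move=> hm; rewrite /minor.
have -> : \matrix_(a, b) (L *m D *m U) (@fm m a) (g b) =
   (\matrix_(a, b) (L *m D) (@fm m a) (fm b)) *m (\matrix_(a, b) U (@fm m a) (g b)).
  apply/matrixP => a b; rewrite !mxE (@sum_trunc _ m) //; last first.
    by move=> t mt; rewrite LD_entry hLl ?mul0r ?mulr0 // fmK // (leq_trans _ mt).
  by apply: eq_bigr => t _; rewrite !mxE.
rewrite det_mulmx det_trig; last first.
  by apply/is_trig_mxP => r s rs; rewrite mxE LD_entry hLl ?mul0r // !fmK.
by congr (_ * _); apply: eq_bigr => r _; rewrite mxE LD_entry hLd mul1r.
Qed.

Variable v : 'S_N.+1.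
Hypothesis Hz : forall m (g : 'I_m -> 'I_N.+1), (m <= N.+1)%N -> injective g ->
  0 <= minor (L *m D *m U) (@fm m) g * phi R (fun s => v (g s)).

Lemma combine (d u' Q S p1 p2 : R) :
  0 <= d * u' * p1 -> 0 <= d * 1 * p2 -> p1 * p2 = Q * S -> 0 < Q -> d != 0 ->
  0 <= u' * S.
Proof.
move=> H1 H2 E Qp dn.
have := mulr_ge0 H1 H2; rewrite mulrACA E.
rewrite mulr1 -(mulrA d u' d) (mulrC u' d) (mulrA d d u') (mulrACA (d * d) u' Q S).
by rewrite pmulr_rge0 // mulr_gt0 // -expr2 exprn_even_gt0.
Qed.

Lemma signU (b c : 'I_N.+1) : (b < c)%N ->
  0 <= U b c * \prod_(q < b) (((v c)%:R - (v (fm q))%:R) * ((v b)%:R - (v (fm q))%:R)).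
Proof.
move=> bc; have hb : (b.+1 <= N.+1)%N := ltn_ord b.
pose g2 := fun s : 'I_b.+1 => if s == ord_max then c else fm s.
have fmlt : forall t : 'I_b.+1, t != ord_max -> fm t != c.
  move=> t tm; apply/eqP => /(congr1 val) /=; rewrite fmK // => e.
  by have := lt_max tm; rewrite e => /(ltn_trans bc); rewrite ltnn.
have g2inj : injective g2.
  move=> s t; rewrite /g2; case: eqP => [->|/eqP sm]; case: eqP => [->|/eqP tm] //.
  - by move=> e; have := fmlt _ tm; rewrite e eqxx.
  - by move=> e; have := fmlt _ sm; rewrite e eqxx.
  - exact: fm_inj.
have H1 := Hz hb g2inj; have H2 := Hz hb (fm_inj hb).
rewrite (minor_z _ hb) (minorU_bc (ltnW bc)) in H1.
rewrite (minor_z _ hb) (minorU_id hb) in H2.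
have [Q Qp EQ] := @phi_replace R _ _ (fun s => v (fm s)) (fun s => v (g2 s)) ord_max
  (fun q qm => congr1 v (ifN_eq _ _ qm)) (fun s t e => fm_inj hb (perm_inj e)).
have := combine H1 H2 EQ Qp (delta_nz _).
by rewrite /g2 eqxx fm_max prod_but_max.
Qed.

Lemma signV (a b : 'I_N.+1) (ab : (a < b)%N) :
  0 <= - invmx U a b * \prod_(q < b | q != Ordinal ab)
        (((v b)%:R - (v (fm q))%:R) * ((v a)%:R - (v (fm q))%:R)).
Proof.
have hb : (b <= N.+1)%N := ltnW (ltn_ord b).
pose g1 := fun s : 'I_b => if s == Ordinal ab then b else fm s.
have fmlt : forall t : 'I_b, fm t != b.
  by move=> t; apply/eqP => /(congr1 val) /=; rewrite fmK // => e; have := ltn_ord t; rewrite e ltnn.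
have g1inj : injective g1.
  move=> s t; rewrite /g1; case: eqP => [->|/eqP sm]; case: eqP => [->|/eqP tm] //.
  - by move=> e; have := fmlt t; rewrite -e eqxx.
  - by move=> e; have := fmlt s; rewrite e eqxx.
  - exact: fm_inj.
have fa : fm (Ordinal ab) = a by apply: val_inj; rewrite /= inordK // (ltn_trans ab).
have H1 := Hz hb g1inj; have H2 := Hz hb (fm_inj hb).
rewrite (minor_z _ hb) minorU_ab in H1.
rewrite (minor_z _ hb) (minorU_id hb) in H2.
have [Q Qp EQ] := @phi_replace R _ _ (fun s => v (fm s)) (fun s => v (g1 s)) (Ordinal ab)
  (fun q qm => congr1 v (ifN_eq _ _ qm)) (fun s t e => fm_inj hb (perm_inj e)).
have := combine H1 H2 EQ Qp (delta_nz _).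
by rewrite /g1 eqxx fa.
Qed.

Lemma pos2 (al be : nat) : be != al -> be != al.+1 ->
  0 < (((al.+1)%:R - be%:R) * (al%:R - be%:R) : R).
Proof.
move=> h1 h2; case: (ltngtP be al) => h.
- by rewrite mulr_gt0 // subr_gt0 ltr_nat // ltnS ltnW.
- have h' : (al.+1 < be)%N by rewrite ltn_neqAle eq_sym h2 h.
  by rewrite -mulrNN mulr_gt0 // oppr_gt0 subr_lt0 ltr_nat // ltnW.
- by rewrite h eqxx in h1.
Qed.

Lemma pos2' (al al1 be : nat) : al1 = al.+1 -> be != al -> be != al1 ->
  0 < ((al1%:R - be%:R) * (al%:R - be%:R) : R).
Proof. by move=> ->; exact: pos2. Qed.

Lemma fm_lt (b : 'I_N.+1) (q : 'I_b) : (fm q < b)%N.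
Proof. by rewrite fmK ?ltn_ord // ltnW. Qed.

Lemma vneq (s t : 'I_N.+1) : s != t -> (v s : nat) != v t.
Proof. by move=> st; apply/eqP => /val_inj /perm_inj e; rewrite e eqxx in st. Qed.

Lemma neq_of_lt (s t : 'I_N.+1) : (s < t)%N -> s != t.
Proof. by move=> st; apply/eqP => e; rewrite e ltnn in st. Qed.

Lemma gen_case (a b c : 'I_N.+1) : (a < b)%N -> (b < c)%N -> v c = (v a).+1 :> nat ->
  0 <= invmx U a b * U b c * ((v a)%:R - (v b)%:R).
Proof.
move=> ab bc hvc.
have H1 := signV ab; have H2 := signU bc.
rewrite (bigD1 (Ordinal ab)) //= in H2.
have fa : fm (Ordinal ab) = a by apply: val_inj; rewrite /= inordK // (ltn_trans ab).
rewrite fa in H2.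
have := mulr_ge0 H1 H2.
have re : forall V U S1 G S2 : R, (-V*S1)*(U*(G*S2)) = (V*U*(-G))*(S1*S2).
  by move=> *; ring.
have eG : ((v c)%:R - (v a)%:R : R) = 1 by rewrite hvc mulrSr addrAC subrr add0r.
rewrite re -big_split /= eG mul1r opprB pmulr_lge0 //.
apply: prodr_gt0 => q qa.
have e2 : forall X Y Z : R, (X*Y)*(Z*X) = X^+2 * (Z*Y) by move=> *; ring.
rewrite e2 mulr_gt0 //.
  rewrite exprn_even_gt0 // subr_eq0 eqr_nat vneq //.
  by apply/eqP => e; have := fm_lt q; rewrite -e ltnn.
apply: (pos2' hvc); apply: vneq.
  apply/eqP => e; case/eqP: qa; apply: val_inj; rewrite /=.
  by have := congr1 val e; rewrite /= fmK // ltnW.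
apply: neq_of_lt; apply: ltn_trans (fm_lt q) bc.
Qed.

Lemma case_eq (a c : 'I_N.+1) : (a < c)%N -> v c = (v a).+1 :> nat -> 0 <= U a c.
Proof.
move=> ac hvc; have := signU ac; rewrite pmulr_lge0 //.
apply: prodr_gt0 => q _; apply: (pos2' hvc); apply: vneq; apply: neq_of_lt.
  exact: fm_lt.
exact: ltn_trans (fm_lt q) ac.
Qed.

Lemma case_succ (a b : 'I_N.+1) (ab : (a < b)%N) : v b = (v a).+1 :> nat -> invmx U a b <= 0.
Proof.
move=> hvb; have := signV ab; rewrite pmulr_lge0 ?oppr_ge0 //.
apply: prodr_gt0 => q qa; apply: (pos2' hvb); apply: vneq.
  apply/eqP => e; case/eqP: qa; apply: val_inj; rewrite /=.
  by have := congr1 val e; rewrite /= fmK // ltnW.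
by apply: neq_of_lt; exact: fm_lt.
Qed.

End Main.

Lemma pmxE (R : realType) n (w : 'S_n) : pmx R w = perm_mx (w^-1)%g.
Proof.
apply/matrixP => a b; rewrite !mxE.
suff -> : ((w^-1)%g a == b) = (a == w b) by [].
by apply/idP/idP => /eqP e; apply/eqP; [rewrite -e permKV | rewrite e permK].
Qed.

Lemma minor_pmx (R : realType) n (x : 'M[R]_n) (w : 'S_n) k (f g : 'I_k -> 'I_n) :
  minor (x *m pmx R w) f g = minor x f (fun s => w (g s)).
Proof.
rewrite /minor; congr (\det _); apply/matrixP => r s; rewrite !mxE.
rewrite (bigD1 (w (g s))) //= mxE eqxx mulr1 big1 ?addr0 // => t /negbTE tk.
by rewrite mxE tk mulr0.
Qed.

Theorem lemma6p6 (R : realType) (n : nat) (u : 'S_n) (x : 'M[R]_n)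
  (U : 'M[R]_n) (i j : 'I_n) (hj : (j.+1 < n)%N) :
  Y_ge u x ->
  gauss_plus (x *m pmx R (u^-1)%g) U ->
  let A := pmx R (u^-1)%g *m U *m pmx R u in
  let j1 := Ordinal hj in
  let P := (invmx A) j i * A i j1 in
  (((i <= j)%N && (u j <= u i <= u j1)%N) -> 0 <= P) /\
  (((j < i)%N && (u j <= u i <= u j1)%N) -> P <= 0) /\
  (~~ (u j <= u i <= u j1)%N -> P = 0).
Proof.
case: n u x U i j hj => [|N] u x U i j hj; first by case: i.
move=> [[_ Hx] _] [[hUu hUd] [L [D [[hLl hLd] [[hDd hDu] hz]]]]] A j1 P.
pose v := (u^-1)%g.
have Hz : forall m (g : 'I_m -> 'I_N.+1), (m <= N.+1)%N -> injective g ->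
    0 <= minor (L *m D *m U) (@fm N m) g * phi R (fun s => v (g s)).
  move=> m g hm ginj; rewrite -hz minor_pmx; apply: (key_sign Hx (fm_strict hm)).
  by move=> s t /perm_inj; exact: ginj.
have uU := U_unit hUu hUd.
have EA : A = col_perm u (row_perm u U).
  by rewrite /A !pmxE invgK row_permE col_permE.
have EV : invmx A = col_perm u (row_perm u (invmx U)).
  have AB : A *m (perm_mx u *m invmx U *m perm_mx (u^-1)%g) = 1%:M.
    rewrite /A !pmxE invgK !mulmxA -(mulmxA _ (perm_mx (u^-1)%g) (perm_mx u)).
    rewrite -perm_mxM mulVg perm_mx1 mulmx1 -(mulmxA _ U) mulmxV // mulmx1.
    by rewrite -perm_mxM mulgV perm_mx1.
  have uA := (mulmx1_unit AB).1.
  rewrite row_permE col_permE.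
  by rewrite -[invmx A]mulmx1 -AB mulmxA mulVmx // mul1mx.
have EP : P = invmx U (u j) (u i) * U (u i) (u j1) by rewrite /P EV EA !mxE.
have hvc : (v (u j1) : nat) = (v (u j)).+1 by rewrite /v !permK.
have ej : v (u j) = j by rewrite /v permK.
have ei : v (u i) = i by rewrite /v permK.
have neq : forall s t : 'I_N.+1, (s : nat) != t -> u s != u t.
  by move=> s t st; apply/eqP => /perm_inj e; rewrite e eqxx in st.
split; [|split].
- move=> /andP[ij /andP[ab bc]]; rewrite EP.
  have jj1 : (j : nat) != j1 by rewrite /= neq_ltn ltnSn.
  have ac' : (u j < u j1)%N by rewrite ltn_neqAle neq // (leq_trans ab bc).
  rewrite leq_eqVlt in ij; case/orP: ij => [/eqP eij|iltj].
    have eij' : i = j by apply: val_inj.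
    rewrite eij' (V_low hUu hUd (leqnn _)) eqxx mul1r.
    exact: (case_eq hUu hUd hLl hLd hDd hDu Hz ac' hvc).
  have ab' : (u j < u i)%N by rewrite ltn_neqAle neq // neq_ltn iltj orbT.
  have bc' : (u i < u j1)%N.
    by rewrite ltn_neqAle neq // neq_ltn /= ltnS ltnW.
  have := gen_case hUu hUd hLl hLd hDd hDu Hz ab' bc' hvc.
  by rewrite ej ei pmulr_lge0 // subr_gt0 ltr_nat.
- move=> /andP[ji /andP[ab bc]]; rewrite EP.
  have jj1 : (j : nat) != j1 by rewrite /= neq_ltn ltnSn.
  have ac' : (u j < u j1)%N by rewrite ltn_neqAle neq // (leq_trans ab bc).
  rewrite leq_eqVlt in ji; case/orP: ji => [/eqP eij|iltj].
    have eij' : i = j1 by apply: val_inj.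
    rewrite eij' hUd mulr1.
    exact: (case_succ hUu hUd hLl hLd hDd hDu Hz ac' hvc).
  have ab' : (u j < u i)%N.
    by rewrite ltn_neqAle neq // neq_ltn (ltn_trans (ltnSn j) iltj).
  have bc' : (u i < u j1)%N by rewrite ltn_neqAle neq // neq_ltn iltj orbT.
  have := gen_case hUu hUd hLl hLd hDd hDu Hz ab' bc' hvc.
  rewrite ej ei nmulr_lge0 // subr_lt0 ltr_nat.
  exact: (ltn_trans (ltnSn j) iltj).
- move=> H; rewrite EP; move: H; rewrite negb_and -!ltnNge => /orP[ba|cb].
    rewrite (V_low hUu hUd (ltnW ba)).
    have /negbTE -> : u j != u i by apply/eqP => e; rewrite e ltnn in ba.
    by rewrite mul0r.
  by rewrite hUu // mulr0.
Qed.
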